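(* Let $m>a\geq0$, $n>b\geq0$ be integers. If there exists a regular erasure pattern $\mathcal{E}\subseteq[m]\times[n]$ that is not correctable in $T_{m\times n}(a,b,0)$, then for any non-negative integers $\delta,\gamma$ there exists a regular erasure pattern $\mathcal{E}'\subseteq[m+\delta]\times[n+\gamma]$ that is not correctable in $T_{(m+\delta)\times(n+\gamma)}(a,b,0)$.
   Context: Positions of vectors in $\mathbb{F}^{mn}$ are identified with $[m]\times[n]$, $[k]=\{1,\dots,k\}$. For linear codes $\mathcal{C}_1\subseteq\mathbb{F}^m,\mathcal{C}_2\subseteq\mathbb{F}^n$, $\mathcal{C}_1\otimes\mathcal{C}_2$ is the row span of the Kronecker product of their generator matrices. A code for the topology $T_{m\times n}(a,b,0)$ is a linear code over a finite field $\mathbb{F}$ whose parity-check matrix is a parity-check matrix of $\mathcal{C}_{\mathsf{col}}\otimes\mathcal{C}_{\mathsf{row}}$, where $\mathcal{C}_{\mathsf{col}}$ is a linear $[m,\geq m-a]$ code and $\mathcal{C}_{\mathsf{row}}$ a linear $[n,\geq n-b]$ code over $\mathbb{F}$; $\mathbb{C}_{m\times n}(a,b,0)$ is the set of these codes (over any finite field). A code corrects an erasure pattern $\mathcal{E}$ if no two distinct codewords agree on all positions outside $\mathcal{E}$; $\mathcal{E}$ is correctable in $T_{m\times n}(a,b,0)$ if some code in $\mathbb{C}_{m\times n}(a,b,0)$ corrects it. An erasure pattern $\mathcal{E}\subseteq[m]\times[n]$ is regular (for $T_{m\times n}(a,b,0)$) if for all $\mathcal{U}\subseteq[m]$ with $|\mathcal{U}|=u\geq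 a$ and all $\mathcal{V}\subseteq[n]$ with $|\mathcal{V}|=v\geq b$ one has $|\mathcal{E}\cap(\mathcal{U}\times\mathcal{V})|\leq va+ub-ab$. *)

(* Defs.v *)
From HB Require Import structures.
From mathcomp Require Import all_boot all_order all_algebra.
From mathcomp Require Import mxtens.
Set Implicit Arguments. Unset Strict Implicit. Unset Printing Implicit Defensive.
Import GRing.Theory.
Local Open Scope ring_scope.

(* A linear code C ⊆ F^k is represented by a generator matrix G : 'M[F]_k
   (square, k rows, so every subspace is representable); C = row space of G,
   dim C = \rank G.  The tensor code C1 ⊗ C2 ⊆ F^(m*n) is the row span of the
   Kronecker product tensmx G1 G2.  Position (i,j) ∈ [m]×[n] is identified
   with coordinate mxtens_index (i, j) of F^(m*n). *)

Definition corrects (F : fieldType) (m n k : nat) (H : 'M[F]_(k, m * n))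
    (E : {set 'I_m * 'I_n}) : Prop :=
  forall c c' : 'rV[F]_(m * n),
    (c <= H)%MS -> (c' <= H)%MS ->
    (forall (i : 'I_m) (j : 'I_n), (i, j) \notin E ->
        c 0 (mxtens_index (i, j)) = c' 0 (mxtens_index (i, j))) ->
    c = c'.

Definition correctable (m n a b : nat) (E : {set 'I_m * 'I_n}) : Prop :=
  exists (F : finFieldType) (Gcol : 'M[F]_m) (Grow : 'M[F]_n),
    [/\ (m - a <= \rank Gcol)%N, (n - b <= \rank Grow)%N
      & corrects (tensmx Gcol Grow) E].

Definition regular (m n a b : nat) (E : {set 'I_m * 'I_n}) : Prop :=
  forall (U : {set 'I_m}) (V : {set 'I_n}),
    (a <= #|U|)%N -> (b <= #|V|)%N ->
    (#|E :&: setX U V| <= #|V| * a + #|U| * b - a * b)%N.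

(* Main.v *)
Require Import Defs.
From mathcomp Require Import all_boot all_order all_algebra.
From mathcomp Require Import mxtens.
From mathcomp Require Import zify.
Set Implicit Arguments. Unset Strict Implicit. Unset Printing Implicit Defensive.
Import GRing.Theory.
Local Open Scope ring_scope.

Lemma shorten (F : fieldType) p q (E1 : 'M[F]_(p,q)) (P1 : 'M[F]_(q,p)) (G : 'M[F]_q) :
  E1 *m P1 = 1%:M ->
  exists G' : 'M[F]_p, (\rank G + p <= \rank G' + q)%N /\ (G' *m E1 <= G)%MS.
Proof.
move=> EP.
set A := (G :&: E1)%MS.
have AE : A *m P1 *m E1 = A.
  have /submxP [D ->] : (A <= E1)%MS by apply: capmxSr.
  by rewrite -!mulmxA (mulmxA E1 P1 E1) EP mul1mx.
exists (<<A *m P1>>%MS); split.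
  rewrite genmxE.
  have h1 := mxrank_sum_cap G E1.
  have h2 : (\rank (G + E1) <= q)%N by apply: rank_leq_col.
  have h3 : \rank E1 = p.
    apply/eqP; rewrite eqn_leq rank_leq_row /=.
    by rewrite -{1}(mxrank1 F p) -EP mxrankM_maxl.
  have h4 : (\rank A <= \rank (A *m P1))%N.
    by rewrite -{1}AE mxrankM_maxl.
  rewrite /A in h4 *; lia.
apply: (submx_trans (_ : _ <= A *m P1 *m E1)%MS).
  by apply: submxMr; rewrite genmxE.
by rewrite AE /A capmxSl.
Qed.

Lemma pad_entry (F : fieldType) m n m' n' (c : 'rV[F]_(m*n)) (A : 'M[F]_(m,m'))
   (B : 'M[F]_(n,n')) i' j' :
  (c *m (tensmx A B)) 0 (mxtens_index (i',j')) =
  \sum_i \sum_j c 0 (mxtens_index (i,j)) * (A i i' * B j j').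
Proof.
rewrite mxE (reindex (@mxtens_index m n)) /=; last first.
  apply: onW_bij; exists (@mxtens_unindex m n); [exact: mxtens_indexK | exact: mxtens_unindexK].
rewrite pair_big; apply: eq_bigr => [[i j]] _ /=.
by rewrite tensmxE.
Qed.

Lemma rowE1 (F : fieldType) d m (i : 'I_m) (i' : 'I_(m+d)) :
  (row_mx (1%:M : 'M[F]_m) (0 : 'M_(m,d))) i i' != 0 -> i' = lshift d i.
Proof.
rewrite -[i']splitK; case: (split i') => k /=.
  rewrite row_mxEl mxE; case: (i =P k) => [-> //|]; by rewrite mulr0n eqxx.
by rewrite row_mxEr mxE eqxx.
Qed.

Lemma tens1 (F : fieldType) m n : (tensmx (1%:M : 'M[F]_m) (1%:M : 'M[F]_n)) = 1%:M.
Proof.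
apply/matrixP => x y.
case: (mxtens_indexP x) => i j; case: (mxtens_indexP y) => k l.
rewrite tensmxE !mxE (inj_eq (can_inj (@mxtens_indexK m n))) xpair_eqE.
by case: eqP => _; case: eqP => _; rewrite /= ?mulr1n ?mulr0n ?mulr1 ?mulr0.
Qed.

Lemma EP (F : fieldType) m d :
  (row_mx (1%:M : 'M[F]_m) (0 : 'M_(m,d))) *m (col_mx (1%:M : 'M[F]_m) (0 : 'M_(d,m))) = 1%:M.
Proof. by rewrite mul_row_col mul1mx mul0mx addr0. Qed.

Definition Eimg m n d g (E : {set 'I_m * 'I_n}) : {set 'I_(m + d) * 'I_(n + g)} :=
  [set (lshift d p.1, lshift g p.2) | p in E].

Lemma corrects_short (F : fieldType) m n d g (G1 : 'M[F]_(m+d)) (G2 : 'M[F]_(n+g))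
  (H1 : 'M[F]_m) (H2 : 'M[F]_n) (E : {set 'I_m * 'I_n}) :
  (H1 *m row_mx 1%:M (0 : 'M_(m,d)) <= G1)%MS ->
  (H2 *m row_mx 1%:M (0 : 'M_(n,g)) <= G2)%MS ->
  corrects (tensmx G1 G2) (Eimg d g E) -> corrects (tensmx H1 H2) E.
Proof.
set E1 := row_mx _ _; set E2 := row_mx _ _.
move=> s1 s2 C c c' hc hc' agree.
have pad x : (x <= tensmx H1 H2)%MS -> (x *m tensmx E1 E2 <= tensmx G1 G2)%MS.
  case/submxP => D ->; case/submxP: s1 => X eX; case/submxP: s2 => Y eY.
  by rewrite -mulmxA tensmx_mul eX eY -tensmx_mul mulmxA submxMl.
have key x : x *m tensmx E1 E2 *m tensmx (col_mx 1%:M (0 : 'M_(d,m))) (col_mx 1%:M (0 : 'M_(g,n))) = x.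
  by rewrite -mulmxA tensmx_mul !EP tens1 mulmx1.
rewrite -(key _ c) -(key _ c'); congr (_ *m _).
apply: C; [exact: pad | exact: pad |].
move=> i' j' Hn; rewrite !pad_entry; apply: eq_bigr => i _; apply: eq_bigr => j _.
case: (boolP ((i,j) \in E)) => hE; last by rewrite agree.
have -> : E1 i i' * E2 j j' = 0.
  apply/eqP; apply/negPn/negP; rewrite mulf_eq0 negb_or => /andP [a1 a2].
  move/rowE1: a1 => ei; move/rowE1: a2 => ej.
  move/negP: Hn; apply; rewrite ei ej; apply/imsetP; by exists (i, j).
by rewrite !mulr0.
Qed.

Lemma regular_Eimg m n d g a b (E : {set 'I_m * 'I_n}) :
  regular a b E -> regular a b (Eimg d g E).
Proof.
move=> R U V hU hV.
pose f := fun p : 'I_m * 'I_n => (lshift d p.1, lshift g p.2).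
have finj : injective f.
  move=> [x y] [x' y'] /(congr1 (fun p => (val p.1, val p.2))) /= [] hx hy; congr pair; exact: val_inj.
pose U1 := [set i | lshift d i \in U]; pose V1 := [set j | lshift g j \in V].
have h1 : (#|Eimg d g E :&: setX U V| <= #|E :&: setX U1 V1|)%N.
  apply: leq_trans (leq_imset_card f _).
  apply: subset_leq_card; apply/subsetP => z /setIP [/imsetP [p pE ->]].
  move=> /setXP [hx hy]; apply/imsetP; exists p => //. idtac.
  rewrite !inE pE /=; apply/andP; split; exact: hx || exact: hy.
have cU : (#|U1| <= #|U|)%N.
  rewrite -(card_imset _ (@lshift_inj m d)); apply: subset_leq_card.
  by apply/subsetP => z /imsetP [i]; rewrite inE => h ->.
have cV : (#|V1| <= #|V|)%N.
  rewrite -(card_imset _ (@lshift_inj n g)); apply: subset_leq_card.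
  by apply/subsetP => z /imsetP [i]; rewrite inE => h ->.
have h2 : (#|E :&: setX U1 V1| <= #|U1| * #|V1|)%N.
  by rewrite -cardsX; apply: subset_leq_card; apply: subsetIr.
have m1 : (#|V1| * a <= #|V| * a)%N by rewrite leq_mul2r cV orbT.
have m2 : (#|U1| * b <= #|U| * b)%N by rewrite leq_mul2r cU orbT.
have m3 : (#|U1| * #|V1| <= #|U1| * #|V|)%N by rewrite leq_mul2l cV orbT.
have m4 : (#|U1| * #|V1| <= #|U| * #|V1|)%N by rewrite leq_mul2r cU orbT.
case: (leqP a #|U1|) => ha; case: (leqP b #|V1|) => hb.
- have X := R U1 V1 ha hb; apply: leq_trans h1 (leq_trans X _); by rewrite leq_sub2r // leq_add.
- nia.
- nia.
- nia.
Qed.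

Theorem lemma6 (m n a b : nat) :
  (a < m)%N -> (b < n)%N ->
  (exists E : {set 'I_m * 'I_n}, regular a b E /\ ~ correctable a b E) ->
  forall delta gamma : nat,
    exists E' : {set 'I_(m + delta) * 'I_(n + gamma)},
      regular a b E' /\ ~ correctable a b E'.
Proof.
move=> ham hbn [E [RE NC]] d g.
exists (Eimg d g E); split; first exact: regular_Eimg.
case=> F [G1 [G2 [r1 r2 C]]].
apply: NC.
have [H1 [rH1 sH1]] := shorten G1 (EP F m d).
have [H2 [rH2 sH2]] := shorten G2 (EP F n g).
exists F, H1, H2; split; [lia | lia | exact: corrects_short sH1 sH2 C].
Qed.
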